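(* Let $U$ and $V$ be unitary matrices of sizes $N\times N$ and $M\times M$ with no zero entries. Then (a) $\mathbb V_U(1)\otimes\mathbb V_V(1)\subset\mathbb V_{U\otimes V}(1)$, where the left side is the complex span of all $F\otimes G$ with $F\in\mathbb V_U(1)$, $G\in\mathbb V_V(1)$; (b) $i\cdot(\mathrm{Im}\,\mathbb V_U(1)\otimes\mathrm{Im}\,\mathbb V_V(1))\subset\mathrm{Im}\,\mathbb V_{U\otimes V}(1)$, where $\mathrm{Im}\,\mathbb V_U(1)\otimes\mathrm{Im}\,\mathbb V_V(1)$ is the real span of all $F\otimes G$ with $F\in\mathrm{Im}\,\mathbb V_U(1)$, $G\in\mathrm{Im}\,\mathbb V_V(1)$; (c) $\mathbf D(U)\cdot\mathbf D(V)\le\mathbf D(U\otimes V)$. The same holds for more than two factors, where in (b) the multiplier $i$ is replaced by $1$ when the number of factors is odd.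
   Context: $\circ$ is the entrywise product, $\otimes$ the Kronecker product. For unitary $W$ with no zero entries: $\mathcal C_W(F)=(F\circ W)W^*$, $\mathcal D_W(F)=W(\overline F\circ W)^*$, $\mathcal I_W=\mathcal C_W^{-1}\mathcal D_W$; $\mathbb V_W(1)$ is the complex eigenspace of $\mathcal I_W$ for eigenvalue $1$, and $\mathrm{Im}\,\mathbb V_W(1)$ is the real space of its purely imaginary elements. The undephased defect $\mathbf D(W)$ is $\dim_{\mathbb R}\{iR\circ W:\ R\text{ real},\ (iR\circ W)W^*\text{ antihermitian}\}$, which equals $\dim_{\mathbb C}\mathbb V_W(1)=\dim_{\mathbb R}\mathrm{Im}\,\mathbb V_W(1)$. *)

(* Defs.v *)
(* Complex scalars: an arbitrary numClosedFieldType C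
   (e.g. algC, or complex R for R : rcfType / realType); "real" = Num.real,
   conjugation = x^*, imaginary unit = 'i. *)
From mathcomp Require Import mxtens.
From HB Require Import structures.
From mathcomp Require Import all_boot all_order all_algebra.
From mathcomp Require Import boolp.
Set Implicit Arguments. Unset Strict Implicit. Unset Printing Implicit Defensive.
Import Order.TTheory GRing.Theory Num.Theory.
Local Open Scope ring_scope.

Section Defs.
Variable C : numClosedFieldType.

Definition adjmx m n (W : 'M[C]_(m, n)) : 'M[C]_(n, m) := (map_mx Num.conj W)^T.

Definition hadamard m n (A B : 'M[C]_(m, n)) : 'M[C]_(m, n) :=
  \matrix_(i, j) (A i j * B i j).

Definition unitary n (W : 'M[C]_n) : Prop :=
  W *m adjmx W = 1%:M /\ adjmx W *m W = 1%:M.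

Definition no_zero_entry n (W : 'M[C]_n) : Prop := forall i j, W i j != 0.

Definition CW n (W : 'M[C]_n) (F : 'M[C]_n) : 'M[C]_n := hadamard F W *m adjmx W.
Definition DW n (W : 'M[C]_n) (F : 'M[C]_n) : 'M[C]_n :=
  W *m adjmx (hadamard (map_mx Num.conj F) W).

(* I_W = C_W^{-1} D_W, with C_W^{-1} computed as the inverse of the matrix of
   the linear map C_W acting on mxvec-coordinates *)
Definition IW n (W : 'M[C]_n) (F : 'M[C]_n) : 'M[C]_n :=
  vec_mx (mxvec (DW W F) *m invmx (lin_mx (CW W))).

Definition V1 n (W : 'M[C]_n) (F : 'M[C]_n) : Prop := IW W F = F.

Definition purely_imaginary m n (F : 'M[C]_(m, n)) : Prop := forall i j, 'Re (F i j) = 0.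
Definition ImV1 n (W : 'M[C]_n) (F : 'M[C]_n) : Prop := V1 W F /\ purely_imaginary F.

(* real dimension of a subset S of 'M[C]_(m,n) (used for real subspaces):
   the largest k such that S contains k elements linearly independent over
   the reals (this is at most 2mn). *)
Definition rfree m n k (F : 'I_k -> 'M[C]_(m, n)) : Prop :=
  forall c : 'I_k -> C, (forall l, c l \is Num.real) ->
    \sum_(l < k) c l *: F l = 0 -> forall l, c l = 0.

Definition rdim m n (S : 'M[C]_(m, n) -> Prop) : nat :=
  \max_(k < (2 * m * n).+1 |
        `[< exists F : 'I_k -> 'M[C]_(m, n), (forall l, S (F l)) /\ rfree F >]) k.

Definition real_mx m n (R : 'M[C]_(m, n)) : Prop := forall i j, R i j \is Num.real.
Definition antihermitian n (X : 'M[C]_n) : Prop := adjmx X = - X.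

Definition defect_set n (W : 'M[C]_n) (X : 'M[C]_n) : Prop :=
  exists R : 'M[C]_n, real_mx R /\ X = hadamard ('i *: R) W /\
                      antihermitian (X *m adjmx W).
Definition defect n (W : 'M[C]_n) : nat := rdim (defect_set W).

End Defs.

Inductive dlist (T : nat -> Type) : seq nat -> Type :=
| dnil : dlist T [::]
| dcons n s : T n -> dlist T s -> dlist T (n :: s).
Arguments dnil {T}.
Arguments dcons {T n s}.

Fixpoint dsize T s (L : dlist T s) : nat :=
  match L with dnil => 0 | dcons _ _ _ L' => (dsize L').+1 end.

Inductive dall (T : nat -> Type) (P : forall n, T n -> Prop) : forall s, dlist T s -> Prop :=
| dall_nil : dall P dnil
| dall_cons n s (x : T n) (L : dlist T s) : P n x -> dall P L -> dall P (dcons x L).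

Inductive dall2 (T T' : nat -> Type) (P : forall n, T n -> T' n -> Prop) :
  forall s, dlist T s -> dlist T' s -> Prop :=
| dall2_nil : dall2 P dnil dnil
| dall2_cons n s (x : T n) (y : T' n) L L' :
    P n x y -> @dall2 T T' P s L L' -> dall2 P (dcons x L) (dcons y L').

Definition sqmx (C : numClosedFieldType) (n : nat) : Type := 'M[C]_n.

Fixpoint tens_list (C : numClosedFieldType) s (L : dlist (sqmx C) s) : 'M[C]_(foldr muln 1 s) :=
  match L in dlist _ s return 'M[C]_(foldr muln 1 s) with
  | dnil => 1%:M
  | dcons n s' A L' => tensmx (A : 'M[C]_n) (tens_list L')
  end.

Fixpoint defect_prod (C : numClosedFieldType) s (L : dlist (sqmx C) s) : nat :=
  match L with
  | dnil => 1
  | dcons n s' A L' => (@defect C n A * defect_prod L')%N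
  end.

(* Main.v *)
Require Import Defs.
From mathcomp Require Import mxtens.
From HB Require Import structures.
From mathcomp Require Import all_boot all_order all_algebra.
From mathcomp Require Import boolp ring.
Import Order.TTheory GRing.Theory Num.Theory.
Local Open Scope ring_scope.
Set Implicit Arguments. Unset Strict Implicit. Unset Printing Implicit Defensive.
Section S.
Variable C : numClosedFieldType.
Section L. Variables (n : nat) (W : 'M[C]_n).
Lemma CW_lin : linear (CW W).
Proof. move=> a A B; apply/matrixP=> i j; rewrite /CW !mxE big_distrr -big_split /=; apply: eq_bigr => k _; rewrite !mxE; ring. Qed.
HB.instance Definition _ := GRing.isLinear.Build C 'M[C]_n 'M[C]_n _ (CW W) CW_lin.
Lemma DW_lin : linear (DW W).
Proof. move=> a A B; apply/matrixP=> i j; rewrite /DW !mxE big_distrr -big_split /=; apply: eq_bigr => k _; rewrite !mxE /= !(rmorphM, rmorphD) /= !conjCK; ring. Qed.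
HB.instance Definition _ := GRing.isLinear.Build C 'M[C]_n 'M[C]_n _ (DW W) DW_lin.
End L.
Lemma adjmx_tens m n p q (A : 'M[C]_(m,n)) (B : 'M[C]_(p,q)) : adjmx (A *t B) = adjmx A *t adjmx B.
Proof. by rewrite /adjmx map_mxT trmx_tens. Qed.
Lemma hadamard_tens m n p q (A A' : 'M[C]_(m,n)) (B B' : 'M[C]_(p,q)) :
  hadamard (A *t B) (A' *t B') = hadamard A A' *t hadamard B B'.
Proof. by apply/matrixP=> i j; rewrite !mxE; ring. Qed.
Lemma CW_tens n m (U F : 'M[C]_n) (V G : 'M[C]_m) : CW (U *t V) (F *t G) = CW U F *t CW V G.
Proof. by rewrite /CW hadamard_tens adjmx_tens tensmx_mul. Qed.
Lemma DW_tens n m (U F : 'M[C]_n) (V G : 'M[C]_m) : DW (U *t V) (F *t G) = DW U F *t DW V G.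
Proof. by rewrite /DW map_mxT hadamard_tens adjmx_tens tensmx_mul. Qed.
Lemma tens11 n m : (1%:M : 'M[C]_n) *t (1%:M : 'M[C]_m) = 1%:M.
Proof.
apply/matrixP=> i j; case: (mxtens_indexP i) => i1 i2; case: (mxtens_indexP j)=> j1 j2.
rewrite tensmxE !mxE (inj_eq (can_inj (@mxtens_indexK _ _))) xpair_eqE -natrM mulnb //.
Qed.
Lemma unitary_tens n m (U : 'M[C]_n) (V : 'M[C]_m) : unitary U -> unitary V -> unitary (U *t V).
Proof. by case=> [h1 h2] [h3 h4]; split; rewrite adjmx_tens tensmx_mul ?h1 ?h2 ?h3 ?h4 tens11. Qed.
Lemma nz_tens n m (U : 'M[C]_n) (V : 'M[C]_m) : no_zero_entry U -> no_zero_entry V -> no_zero_entry (U *t V).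
Proof.
move=> hU hV i j; case: (mxtens_indexP i) => i1 i2; case: (mxtens_indexP j)=> j1 j2.
by rewrite tensmxE mulf_neq0.
Qed.
Lemma V1P n (W F : 'M[C]_n) : unitary W -> no_zero_entry W -> V1 W F <-> DW W F = CW W F.
Proof.
move=> [hW1 hW2] hz.
have uL : lin_mx (CW W) \in unitmx.
  rewrite -row_free_unit; apply: inj_row_free => v.
  rewrite -[v]vec_mxK mul_vec_lin => /(canRL mxvecK); rewrite linear0 => h.
  have : CW W (vec_mx v) *m W = 0 by rewrite h mul0mx.
  rewrite /CW -mulmxA hW2 mulmx1 => /matrixP h2.
  apply: (can_inj (@vec_mxK _ _ _)); rewrite linear0.
  apply/matrixP=> i j.
  have := h2 i j; rewrite !mxE => /eqP; rewrite mulf_eq0 (negbTE (hz i j)) orbF => /eqP hh; by rewrite vec_mxK.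
rewrite /V1 /IW; split=> h.
  have : mxvec F *m lin_mx (CW W) = mxvec (DW W F) by rewrite -{1}h vec_mxK mulmxKV.
  by rewrite mul_vec_lin => /(can_inj (@mxvecK _ _ _)).
by rewrite h -mul_vec_lin mulmxK // mxvecK.
Qed.
Definition purek (b : bool) (x : C) := x^* = (if b then - x else x).
Definition mpure m n b (A : 'M[C]_(m,n)) := forall i j, purek b (A i j).
Lemma purek_mul a b x y : purek a x -> purek b y -> purek (a (+) b) (x * y).
Proof. rewrite /purek => hx hy; rewrite rmorphM /= hx hy {hx hy}; case: a; case: b => /=; rewrite ?mulrNN ?mulrN ?mulNr ?opprK //. Qed.
Lemma purek_real x : x \is Num.real -> purek false x.
Proof. by move=> h; rewrite /purek conj_Creal. Qed.
Lemma purek_i : purek true 'i.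
Proof. exact: conjCi. Qed.
Lemma mpure_tens m n p q a b (A : 'M[C]_(m,n)) (B : 'M[C]_(p,q)) :
  mpure a A -> mpure b B -> mpure (a (+) b) (A *t B).
Proof.
move=> hA hB i j; case: (mxtens_indexP i) => i1 i2; case: (mxtens_indexP j)=> j1 j2.
by rewrite tensmxE; apply: purek_mul.
Qed.
Lemma mpure_scale m n a b c (A : 'M[C]_(m,n)) : purek a c -> mpure b A -> mpure (a (+) b) (c *: A).
Proof. by move=> hc hA i j; rewrite mxE; apply: purek_mul. Qed.
Lemma mpure_sum m n b k (X : 'I_k -> 'M[C]_(m,n)) : (forall l, mpure b (X l)) -> mpure b (\sum_(l < k) X l).
Proof.
move=> h i j; rewrite /purek summxE rmorph_sum.
have -> : \sum_(l < k) (X l i j)^* = \sum_(l < k) (if b then - X l i j else X l i j).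
  by apply: eq_bigr => l _; apply: h.
by clear h; case: b => //; rewrite sumrN.
Qed.
Lemma mpure_lincomb m n b k (c : 'I_k -> C) (X : 'I_k -> 'M[C]_(m,n)) :
  (forall l, c l \is Num.real) -> (forall l, mpure b (X l)) -> mpure b (\sum_(l < k) c l *: X l).
Proof. move=> hc h; apply: mpure_sum => l; exact: (mpure_scale (purek_real (hc l)) (h l)). Qed.
Lemma Re0P x : 'Re x = 0 <-> purek true x.
Proof.
rewrite /purek ReE; split.
  move/eqP; rewrite mulf_eq0 invr_eq0 pnatr_eq0 orbF addrC addr_eq0 => /eqP //.
by move=> ->; rewrite subrr mul0r.
Qed.
Lemma pi_mpure m n (A : 'M[C]_(m,n)) : purely_imaginary A <-> mpure true A.
Proof. by split=> h i j; apply/Re0P. Qed.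
Lemma mpure1 n : mpure false (1%:M : 'M[C]_n).
Proof. by move=> i j; rewrite mxE; apply: purek_real; rewrite realn. Qed.

Lemma V1_lincomb n (W : 'M[C]_n) k (a : C) (c : 'I_k -> C) (X : 'I_k -> 'M[C]_n) :
  unitary W -> no_zero_entry W -> (forall l, DW W (X l) = CW W (X l)) ->
  V1 W (a *: \sum_(l < k) c l *: X l).
Proof.
move=> hu hz h; apply/V1P => //; rewrite !linearZ !linear_sum /=; congr (_ *: _).
by apply: eq_bigr => l _; rewrite !linearZ /= h.
Qed.

Lemma partab n m (U : 'M[C]_n) (V : 'M[C]_m) : unitary U -> no_zero_entry U -> unitary V -> no_zero_entry V ->
     (forall (k : nat) (c : 'I_k -> C) (F : 'I_k -> 'M[C]_n) (G : 'I_k -> 'M[C]_m),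
        (forall l, V1 U (F l)) -> (forall l, V1 V (G l)) ->
        V1 (tensmx U V) (\sum_(l < k) c l *: tensmx (F l) (G l)))
     /\
     (forall (k : nat) (c : 'I_k -> C) (F : 'I_k -> 'M[C]_n) (G : 'I_k -> 'M[C]_m),
        (forall l, c l \is Num.real) ->
        (forall l, ImV1 U (F l)) -> (forall l, ImV1 V (G l)) ->
        ImV1 (tensmx U V) ('i *: \sum_(l < k) c l *: tensmx (F l) (G l))).
Proof.
move=> hU zU hV zV; have hUV := unitary_tens hU hV; have zUV := nz_tens zU zV.
have key k (F : 'I_k -> 'M[C]_n) (G : 'I_k -> 'M[C]_m) :
  (forall l, V1 U (F l)) -> (forall l, V1 V (G l)) ->
  forall l, DW (U *t V) (F l *t G l) = CW (U *t V) (F l *t G l).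
  by move=> hF hG l; rewrite DW_tens CW_tens (proj1 (V1P _ hU zU) (hF l)) (proj1 (V1P _ hV zV) (hG l)).
split.
  move=> k c F G hF hG; rewrite -[X in V1 _ X]scale1r; exact: V1_lincomb (key _ _ _ hF hG).
move=> k c F G hc hF hG; split.
  by apply: V1_lincomb => //; apply: key => l; [case: (hF l)|case: (hG l)].
apply/pi_mpure; rewrite -[true]/(true (+) false); apply: mpure_scale; first exact: purek_i.
apply: mpure_lincomb => // l; rewrite -[false]/(true (+) true); apply: mpure_tens.
  by apply/pi_mpure; case: (hF l).
by apply/pi_mpure; case: (hG l).
Qed.
Lemma rdim_ge m n (S : 'M[C]_(m,n) -> Prop) k (F : 'I_k -> 'M[C]_(m,n)) :
  (k <= 2 * m * n)%N -> (forall l, S (F l)) -> rfree F -> (k <= rdim S)%N.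
Proof.
move=> hk hS hF; rewrite /rdim.
have hk' : (k < (2 * m * n).+1)%N by rewrite ltnS.
apply: (@leq_bigmax_cond _ _ (fun i : 'I_(2 * m * n).+1 => nat_of_ord i) (Ordinal hk')).
by apply/asboolP; exists F.
Qed.
Lemma rdim_wit m n (S : 'M[C]_(m,n) -> Prop) :
  exists F : 'I_(rdim S) -> 'M[C]_(m,n), (forall l, S (F l)) /\ rfree F.
Proof.
have P0 : `[< exists F : 'I_(@ord0 (2 * m * n)) -> 'M[C]_(m, n), (forall l, S (F l)) /\ rfree F >].
  apply/asboolP; exists (fun _ => 0); split; first by case. by move=> c _ _ [].

rewrite /rdim (@bigop.bigmax_eq_arg _ ord0 _ (fun i : 'I_(2 * m * n).+1 => nat_of_ord i) P0).
by case: arg_maxnP => // i /asboolP.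
Qed.
Lemma lincomb_had n k (d : 'I_k -> C) (R : 'I_k -> 'M[C]_n) (W : 'M[C]_n) :
  \sum_(l < k) d l *: hadamard ('i *: R l) W = hadamard ('i *: \sum_(l < k) d l *: R l) W.
Proof.
apply/matrixP=> i j; rewrite !mxE !summxE big_distrr big_distrl /=.
by apply: eq_bigr => l _; rewrite !mxE; ring.
Qed.
Lemma rfree_R n k (W : 'M[C]_n) (F R : 'I_k -> 'M[C]_n) :
  rfree F -> (forall l, F l = hadamard ('i *: R l) W) ->
  forall d, (forall l, d l \is Num.real) -> \sum_(l < k) d l *: R l = 0 -> forall l, d l = 0.
Proof.
move=> hF hR d hd h0; apply: hF => //.
under eq_bigr do rewrite hR; rewrite lincomb_had h0 scaler0.
by apply/matrixP=> i j; rewrite !mxE mul0r.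
Qed.
Lemma conj_lincomb n k (d : 'I_k -> C) (R : 'I_k -> 'M[C]_n) : (forall l, real_mx (R l)) ->
  map_mx Num.conj (\sum_(l < k) d l *: R l) = \sum_(l < k) (d l)^* *: R l.
Proof.
move=> hR; apply/matrixP=> i j; rewrite !mxE !summxE rmorph_sum; apply: eq_bigr => l _.
by rewrite !mxE rmorphM /= (conj_Creal (hR l i j)).
Qed.
Lemma rfree_Cfree n k (W : 'M[C]_n) (F R : 'I_k -> 'M[C]_n) :
  rfree F -> (forall l, F l = hadamard ('i *: R l) W) -> (forall l, real_mx (R l)) ->
  forall v : 'I_k -> C, \sum_(l < k) v l *: R l = 0 -> forall l, v l = 0.
Proof.
move=> hF hR hr v h0.
have h1 : \sum_(l < k) (v l)^* *: R l = 0 by rewrite -conj_lincomb // h0 map_mx0.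
have e1 := rfree_R hF hR (d := fun l => v l + (v l)^*).
have e2 := rfree_R hF hR (d := fun l => 'i * (v l - (v l)^*)).
move=> l.
have -> : v l = ((v l + (v l)^*) - 'i * ('i * (v l - (v l)^*))) / 2%:R.
  rewrite mulrA mulCii; apply: (canRL (mulfK _)); first by rewrite pnatr_eq0.
  rewrite mulr_natr mulr2n; ring.
rewrite e1 ?e2 ?mulr0 ?subrr ?mul0r //.
- by move=> l'; rewrite CrealE rmorphM rmorphB /= conjCi conjCK; apply/eqP; ring.
- under eq_bigr do rewrite -scalerA scalerBl.
  by rewrite -scaler_sumr sumrB h0 h1 subrr scaler0.
- by move=> l'; rewrite CrealE rmorphD /= conjCK addrC.
- by under eq_bigr do rewrite scalerDl; rewrite big_split /= h0 h1 addr0.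
Qed.
Lemma dim_bound n k (W : 'M[C]_n) (F : 'I_k -> 'M[C]_n) :
  (forall l, defect_set W (F l)) -> rfree F -> (k <= n * n)%N.
Proof.
move=> hS hF.
have [R hR] := choice (P := fun l R => real_mx R /\ F l = hadamard ('i *: R) W /\ antihermitian (F l *m adjmx W)) hS.
have hRr l : real_mx (R l) by case: (hR l).
have hRe l : F l = hadamard ('i *: R l) W by case: (hR l) => _ [].
pose A := \matrix_(l < k) mxvec (R l).
have rf : row_free A.
  apply: inj_row_free => v hv.
  have h0 : \sum_(l < k) v 0 l *: R l = 0.
    apply: (can_inj (@mxvecK _ _ _)); rewrite linear0 linear_sum /= -[RHS]hv mulmx_sum_row.
    by apply: eq_bigr => l _; rewrite linearZ /= rowK.
  by apply/rowP => l; rewrite mxE (rfree_Cfree hF hRe hRr h0).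
have := rank_leq_col A; by move: rf; rewrite /row_free => /eqP ->.
Qed.
Lemma antiherm_tens m n (A : 'M[C]_m) (B : 'M[C]_n) :
  antihermitian A -> antihermitian B -> antihermitian ('i *: (A *t B)).
Proof.
rewrite /antihermitian => /matrixP hA /matrixP hB.
have hA' i j : (A j i)^* = - A i j by have := hA i j; rewrite !mxE.
have hB' i j : (B j i)^* = - B i j by have := hB i j; rewrite !mxE.
apply/matrixP=> i j; case: (mxtens_indexP i) => i1 i2; case: (mxtens_indexP j)=> j1 j2.
rewrite !mxE !mxtens_indexK /= !rmorphM /= conjCi hA' hB'; ring.
Qed.
Lemma defect_choice n k (W : 'M[C]_n) (F : 'I_k -> 'M[C]_n) :
  (forall l, defect_set W (F l)) -> exists R : 'I_k -> 'M[C]_n,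
  forall l, real_mx (R l) /\ F l = hadamard ('i *: R l) W /\ antihermitian (F l *m adjmx W).
Proof. by move=> hS; have [R hR] := choice (P := fun l R => real_mx R /\ F l = hadamard ('i *: R) W /\ antihermitian (F l *m adjmx W)) hS; exists R. Qed.

Lemma partc n m (U : 'M[C]_n) (V : 'M[C]_m) : no_zero_entry U -> no_zero_entry V ->
  (defect U * defect V <= defect (U *t V))%N.
Proof.
move=> zU zV.
have [F [hFS hFf]] := rdim_wit (defect_set U).
have [G [hGS hGf]] := rdim_wit (defect_set V).
have ha := dim_bound hFS hFf; have hb := dim_bound hGS hGf.
have [R hR] := defect_choice hFS; have [S hS] := defect_choice hGS.
have hRr l : real_mx (R l) by case: (hR l).
have hRe l : F l = hadamard ('i *: R l) U by case: (hR l) => _ [].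
have hRa l : antihermitian (F l *m adjmx U) by case: (hR l) => _ [].
have hSr l : real_mx (S l) by case: (hS l).
have hSe l : G l = hadamard ('i *: S l) V by case: (hS l) => _ [].
have hSa l : antihermitian (G l *m adjmx V) by case: (hS l) => _ [].
move: F hFS hFf G hGS hGf ha hb R hR hRr hRe hRa S hS hSr hSe hSa.
rewrite /defect; set a := rdim _; set b := rdim _ => F hFS hFf G hGS hGf ha hb R hR hRr hRe hRa S hS hSr hSe hSa.
pose H := fun p : 'I_(a * b) => 'i *: (F (mxtens_unindex p).1 *t G (mxtens_unindex p).2).
apply: (@rdim_ge _ _ _ _ H).
- have := leq_mul ha hb; move: (a * b)%N => x hx.
  by apply: (leq_trans hx); rewrite mulnACA -[(2 * _ * _)%N]mulnA leq_pmull.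
- move=> p; exists (('i * 'i) *: (R (mxtens_unindex p).1 *t S (mxtens_unindex p).2)); split.
    move=> i j; case: (mxtens_indexP i) => i1 i2; case: (mxtens_indexP j)=> j1 j2.
    by rewrite mxE tensmxE mulCii rpredM ?rpredN1 ?rpredM ?hRr ?hSr.
  split.
    rewrite /H hRe hSe; apply/matrixP=> i j; case: (mxtens_indexP i) => i1 i2; case: (mxtens_indexP j)=> j1 j2.
    rewrite !mxE !mxtens_indexK /=; ring.
  by rewrite /H -scalemxAl adjmx_tens tensmx_mul; apply: antiherm_tens.
move=> c hc hsum.
pose c2 (j : 'I_a) (k : 'I_b) := c (mxtens_index (j, k)).
have hc2 j k : c2 j k \is Num.real by apply: hc.
have hE i1 i2 j1 j2 : \sum_(j < a) \sum_(k < b) c2 j k * (R j i1 j1 * S k i2 j2) = 0.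
  have := congr1 (fun X : 'M[C]_(n * m) => X (mxtens_index (i1, i2)) (mxtens_index (j1, j2))) hsum.
  rewrite /= summxE mxE.
  pose K := 'i * ('i * U i1 j1) * ('i * V i2 j2).
  have e p : (c p *: H p) (mxtens_index (i1, i2)) (mxtens_index (j1, j2)) =
     K * (c p * (R (mxtens_unindex p).1 i1 j1 * S (mxtens_unindex p).2 i2 j2)).
    by rewrite /H hRe hSe !mxE !mxtens_indexK /= /K; ring.
  rewrite (eq_bigr _ (fun p _ => e p)).
  rewrite -big_distrr => /eqP; rewrite mulf_eq0 /K !mulf_eq0 (negbTE (@neq0Ci C)) (negbTE (zU _ _)) (negbTE (zV _ _)) !orFb => /eqP hs.
  rewrite pair_big /= (reindex (@mxtens_unindex a b)).
    rewrite -[RHS]hs; apply: eq_bigr => q _.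
    by case: (mxtens_indexP q) => j k; rewrite mxtens_indexK.
  by exists (@mxtens_index a b) => q _; [apply: mxtens_unindexK | apply: mxtens_indexK].
have hd i1 j1 k : \sum_(j < a) c2 j k * R j i1 j1 = 0.
  pose d k := \sum_(j < a) c2 j k * R j i1 j1.
  have hdr k' : d k' \is Num.real by apply: rpred_sum => j _; rewrite rpredM ?hRr.
  have hsd : \sum_(k < b) d k *: S k = 0.
    apply/matrixP=> i2 j2; rewrite summxE [RHS]mxE -[RHS](hE i1 i2 j1 j2) exchange_big /=.
    by apply: eq_bigr => k' _; rewrite mxE big_distrl /=; apply: eq_bigr => j _; ring.
  exact: (rfree_R hGf hSe hdr hsd).
have hc0 j k : c2 j k = 0.
  have hrr j' : c2 j' k \is Num.real by [].
  have hs : \sum_(j < a) c2 j k *: R j = 0.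
    by apply/matrixP=> i1 j1; rewrite summxE [RHS]mxE -[RHS](hd i1 j1 k); apply: eq_bigr => j' _; rewrite mxE.
  exact: (rfree_R hFf hRe hrr hs).
by move=> p; case: (mxtens_indexP p) => j k; apply: hc0.
Qed.
Lemma dall_inv T P s (L : dlist T s) : dall P L ->
  match L with dnil => True | dcons n s x L' => P n x /\ dall P L' end.
Proof. by case. Qed.
Lemma dall2_impl T T' (P Q : forall n, T n -> T' n -> Prop) s (L : dlist T s) (L' : dlist T' s) :
  (forall n x y, P n x y -> Q n x y) -> dall2 P L L' -> dall2 Q L L'.
Proof. by move=> h; elim=> [|n s' x y M M' hp _ IH]; constructor; auto. Qed.

Definition unz n (W : sqmx C n) := unitary (W : 'M[C]_n) /\ no_zero_entry (W : 'M[C]_n).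

Lemma DW1 (X : 'M[C]_1) : DW 1%:M X = CW 1%:M X.
Proof. apply/matrixP=> i j; rewrite !ord1 !mxE !big_ord1 !mxE /= !rmorphM /= conjCK; ring. Qed.

Lemma M1 s (Us : dlist (sqmx C) s) : dall unz Us -> unitary (tens_list Us) /\ no_zero_entry (tens_list Us).
Proof.
elim=> [|n s' W L [hu hz] _ [IHu IHz]] /=; last by split; [exact: unitary_tens | exact: nz_tens].
have a1 : adjmx (1%:M : 'M[C]_1) = 1%:M by rewrite /adjmx map_scalar_mx rmorph1 tr_scalar_mx.
split; first by split; rewrite a1 mul1mx.
by move=> i j; rewrite !ord1 mxE eqxx oner_neq0.
Qed.

Lemma M2 s (Us Fs : dlist (sqmx C) s) :
  dall2 (fun n (W F : sqmx C n) => V1 (W : 'M[C]_n) F) Us Fs -> dall unz Us ->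
  DW (tens_list Us) (tens_list Fs) = CW (tens_list Us) (tens_list Fs).
Proof.
elim=> [|n s' W F L L' hV _ IH] hU /=; first exact: DW1.
have [[hu hz] hL] := dall_inv hU.
by rewrite DW_tens CW_tens (proj1 (V1P _ hu hz) hV) IH.
Qed.

Lemma M3 s (Us Fs : dlist (sqmx C) s) :
  dall2 (fun n (W F : sqmx C n) => ImV1 (W : 'M[C]_n) F) Us Fs -> mpure (odd (size s)) (tens_list Fs).
Proof.
elim=> [|n s' W F L L' [_ hF] _ IH] /=; first exact: mpure1.
by rewrite -[~~ _]/(true (+) odd (size s')); apply: mpure_tens => //; apply/pi_mpure.
Qed.

Lemma defect1 : (1 <= defect (1%:M : 'M[C]_1))%N.
Proof.
apply: (@rdim_ge _ _ _ 1 (fun _ => hadamard ('i *: 1%:M) 1%:M)) => //.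
- move=> _; exists 1%:M; split; first by move=> i j; rewrite mxE realn.
  split=> //; apply/matrixP=> i j; rewrite !ord1 !mxE !big_ord1 !mxE /= !rmorphM /= conjCi !rmorph1; ring.
- move=> c hc; rewrite big_ord1 => /matrixP /(_ ord0 ord0); rewrite !mxE /= => /eqP.
  rewrite !mulr1 mulf_eq0 (negbTE (@neq0Ci C)) orbF => /eqP h l; by rewrite ord1.
Qed.

Lemma M4 s (Us : dlist (sqmx C) s) : dall unz Us -> (defect_prod Us <= defect (tens_list Us))%N.
Proof.
elim=> [|n s' W L [hu hz] hL IH] /=; first exact: defect1.
exact: leq_trans (leq_mul (leqnn _) IH) (partc hz (M1 hL).2).
Qed.
End S.
Theorem corollary3p14 (C : numClosedFieldType) :
  (* two factors *)
  (forall (N M : nat) (U : 'M[C]_N) (V : 'M[C]_M),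
     unitary U -> no_zero_entry U -> unitary V -> no_zero_entry V ->
     (* (a) complex span of F (x) G, F in V_U(1), G in V_V(1) *)
     (forall (k : nat) (c : 'I_k -> C) (F : 'I_k -> 'M[C]_N) (G : 'I_k -> 'M[C]_M),
        (forall l, V1 U (F l)) -> (forall l, V1 V (G l)) ->
        V1 (tensmx U V) (\sum_(l < k) c l *: tensmx (F l) (G l)))
     /\
     (* (b) i * real span of F (x) G, F in Im V_U(1), G in Im V_V(1) *)
     (forall (k : nat) (c : 'I_k -> C) (F : 'I_k -> 'M[C]_N) (G : 'I_k -> 'M[C]_M),
        (forall l, c l \is Num.real) ->
        (forall l, ImV1 U (F l)) -> (forall l, ImV1 V (G l)) ->
        ImV1 (tensmx U V) ('i *: \sum_(l < k) c l *: tensmx (F l) (G l)))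
     /\
     (* (c) *)
     (defect U * defect V <= defect (tensmx U V))%N)
  /\
  (* any number (>= 2) of factors U_1, ..., U_p *)
  (forall (s : seq nat) (Us : dlist (sqmx C) s),
     (2 <= size s)%N ->
     dall (fun n (W : sqmx C n) => unitary (W : 'M[C]_n) /\ no_zero_entry (W : 'M[C]_n)) Us ->
     (forall (k : nat) (c : 'I_k -> C) (Fs : 'I_k -> dlist (sqmx C) s),
        (forall l, dall2 (fun n (W F : sqmx C n) => V1 (W : 'M[C]_n) F) Us (Fs l)) ->
        V1 (tens_list Us) (\sum_(l < k) c l *: tens_list (Fs l)))
     /\
     (forall (k : nat) (c : 'I_k -> C) (Fs : 'I_k -> dlist (sqmx C) s),
        (forall l, c l \is Num.real) ->
        (forall l, dall2 (fun n (W F : sqmx C n) => ImV1 (W : 'M[C]_n) F) Us (Fs l)) ->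
        ImV1 (tens_list Us)
          ((if odd (size s) then 1 else 'i) *: \sum_(l < k) c l *: tens_list (Fs l)))
     /\
     (defect_prod Us <= defect (tens_list Us))%N).

Proof.
split.
  move=> N M U V hU zU hV zV; have [pa pb] := partab hU zU hV zV.
  by split=> //; split=> //; exact: partc.
move=> s Us _ hU; have [hu hz] := M1 hU; split; [|split].
- move=> k c Fs hF; rewrite -[X in V1 _ X]scale1r; apply: V1_lincomb => // l; exact: M2 (hF l) hU.
- move=> k c Fs hc hF; split.
    apply: V1_lincomb => // l; apply: M2 _ hU.
    by apply: dall2_impl (hF l) => n x y [].
  apply/pi_mpure.
  have hm : mpure (odd (size s)) (\sum_(l < k) c l *: tens_list (Fs l)).
    by apply: mpure_lincomb => // l; exact: M3 (hF l).
  case: (odd (size s)) hm => hm /=.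
    exact: (mpure_scale (purek_real (rpred1 _)) hm).
  exact: (mpure_scale (@purek_i C) hm).
- exact: M4.
Qed.
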